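(* Let $t$ be a term of the silly substitution calculus. If there is a derivation $\pi\triangleright\Gamma\vdash^{(m,e)} t : L$ in the silly multi type system, then $t$ is strongly $\to_w$-normalizing. Moreover, if $d: t\to_w^* n$ is a reduction sequence to a $\to_w$-normal term $n$, then the number of $\to_{wm}$ steps in $d$ is at most $m$ and the number of $\to_{we}$ steps in $d$ is at most $e$.
   Context: Terms: $t ::= x \mid \lambda x.t \mid t\,u \mid t[x\backslash u]$ ($t[x\backslash u]$ an explicit substitution binding $x$ in $t$; terms up to $\alpha$). Values $v ::= \lambda x.t$. Substitution contexts $S ::= \langle\cdot\rangle\mid S[x\backslash u]$. Weak contexts $W ::= \langle\cdot\rangle \mid W\,t \mid t\,W \mid t[x\backslash W] \mid W[x\backslash u]$; $W\langle\langle t\rangle\rangle$ is plugging without capture of free variables of $t$. Root rules: $S\langle\lambda x.t\rangle u\mapsto_m S\langle t[x\backslash u]\rangle$; $W\langle\langle x\rangle\rangle[x\backslash u]\mapsto_e W\langle\langle u\rangle\rangle[x\backslash u]$; $t[x\backslash S\langle v\rangle]\mapsto_{gcv} S\langle t\rangle$ if $x\notin\mathrm{fv}(t)$. $\to_{wm},\to_{we},\to_{wgcv}$ are their closures under weak contexts, $\to_w$ their union. Strongly normalizing: no infinite reduction sequence. Silly multi types: linear types $L ::= \mathtt{n} \mid M\multimap L$; multi types $M ::= [L_i]_{i\in I}$ finite multisets ($\mathbf{0}$ empty, $\uplus$ sum). Type contexts $\Gamma$ map variables to multi types with finite support; $\uplus$ pointwise; $\Gamma\setminus\!\!\setminus x$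 sets $x$ to $\mathbf{0}$. Rules: (ax) $x:[L]\vdash^{(0,1)} x:L$; (many) from $(\Gamma_i\vdash^{(m_i,e_i)} t : L_i)_{i\in I}$, $I$ finite possibly empty, infer $\uplus_i\Gamma_i\vdash^{(\sum m_i,\sum e_i)} t : [L_i]_{i\in I}$; ($\mathrm{ax}_\lambda$) $\vdash^{(0,0)}\lambda x.t:\mathtt{n}$; ($\lambda$) from $\Gamma\vdash^{(m,e)}t:L$ infer $\Gamma\setminus\!\!\setminus x\vdash^{(m,e)}\lambda x.t:\Gamma(x)\multimap L$; (@) from $\Gamma\vdash^{(m,e)} t : M\multimap L$ and $\Delta\vdash^{(m',e')} u : M\uplus[\mathtt{n}]$ infer $\Gamma\uplus\Delta\vdash^{(m+m'+1,e+e')} tu : L$; (ES) from $\Gamma\vdash^{(m,e)} t:L$ and $\Delta\vdash^{(m',e')}u:\Gamma(x)\uplus[\mathtt{n}]$ infer $(\Gamma\setminus\!\!\setminus x)\uplus\Delta\vdash^{(m+m',e+e')} t[x\backslash u]:L$. *)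

(* Defs.v *)
(* Silly substitution calculus (weak reduction) and silly multi types.
   Terms up to alpha are represented with de Bruijn indices. *)
From Stdlib Require Import List Arith.
Import ListNotations.

(* Var n | Lam t (binds index 0 in t) | App t u | ES t u  = t[x\u] (binds index 0 in t) *)
Inductive tm : Type :=
| Var : nat -> tm
| Lam : tm -> tm
| App : tm -> tm -> tm
| ES  : tm -> tm -> tm.

Fixpoint lift (k c : nat) (t : tm) : tm :=
  match t with
  | Var n => if c <=? n then Var (n + k) else Var n
  | Lam t1 => Lam (lift k (S c) t1)
  | App t1 t2 => App (lift k c t1) (lift k c t2)
  | ES t1 t2 => ES (lift k (S c) t1) (lift k c t2)
  end.

Inductive sctx : Type :=
| SHole : sctx
| SES : sctx -> tm -> sctx.       (* SES S u  =  S[x\u] *)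

Fixpoint fillS (s : sctx) (t : tm) : tm :=
  match s with
  | SHole => t
  | SES s' u => ES (fillS s' t) u
  end.

Fixpoint depthS (s : sctx) : nat :=
  match s with
  | SHole => 0
  | SES s' _ => Datatypes.S (depthS s')
  end.

Inductive wctx : Type :=
| WHole : wctx
| WAppL : wctx -> tm -> wctx
| WAppR : tm -> wctx -> wctx
| WESArg : tm -> wctx -> wctx     (* t[x\W]  *)
| WESBody : wctx -> tm -> wctx.   (* W[x\u]  *)

(* ordinary plugging W<t> (t lives in the scope of the hole: capture allowed) *)
Fixpoint fillW (W : wctx) (t : tm) : tm :=
  match W with
  | WHole => t
  | WAppL W' u => App (fillW W' t) u
  | WAppR u W' => App u (fillW W' t)
  | WESArg u W' => ES u (fillW W' t)
  | WESBody W' u => ES (fillW W' t) u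
  end.

Fixpoint depthW (W : wctx) : nat :=
  match W with
  | WHole => 0
  | WAppL W' _ => depthW W'
  | WAppR _ W' => depthW W'
  | WESArg _ W' => depthW W'
  | WESBody W' _ => Datatypes.S (depthW W')
  end.

(* capture-avoiding plugging W<<t>> (t lives in the scope outside W) *)
Definition fillWc (W : wctx) (t : tm) : tm := fillW W (lift (depthW W) 0 t).

Inductive kind : Type := Km | Ke | Kgcv.

Inductive root : kind -> tm -> tm -> Prop :=
(* S<\x.t> u  |->m  S<t[x\u]> *)
| root_m : forall (s : sctx) t u,
    root Km (App (fillS s (Lam t)) u) (fillS s (ES t (lift (depthS s) 0 u)))
(* W<<x>>[x\u]  |->e  W<<u>>[x\u] *)
| root_e : forall W u,
    root Ke (ES (fillWc W (Var 0)) u) (ES (fillWc W (lift 1 0 u)) u)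
(* t[x\S<v>]  |->gcv  S<t>   if x not free in t  (i.e. t is the lift of some t0) *)
| root_gcv : forall (s : sctx) t0 v,
    root Kgcv (ES (lift 1 0 t0) (fillS s (Lam v))) (fillS s (lift (depthS s) 0 t0)).

Definition wstep (k : kind) (t t' : tm) : Prop :=
  exists W r r', root k r r' /\ t = fillW W r /\ t' = fillW W r'.

Definition wred (t t' : tm) : Prop := exists k, wstep k t t'.

Definition wnormal (t : tm) : Prop := forall t', ~ wred t t'.

Definition wSN (t : tm) : Prop :=
  ~ exists f : nat -> tm, f 0 = t /\ forall i, wred (f i) (f (S i)).

Inductive redseq : tm -> list kind -> tm -> Prop :=
| rs_refl : forall t, redseq t [] t
| rs_step : forall k t t' ks u, wstep k t t' -> redseq t' ks u -> redseq t (k :: ks) u.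

Definition kind_eqb (k1 k2 : kind) : bool :=
  match k1, k2 with
  | Km, Km | Ke, Ke | Kgcv, Kgcv => true
  | _, _ => false
  end.

Definition count_kind (k : kind) (ks : list kind) : nat :=
  length (filter (kind_eqb k) ks).

(* linear types L ::= n | M -o L ; multi types M = finite multisets, represented as lists *)
Inductive ltype : Type :=
| Tn : ltype
| Arr : list ltype -> ltype -> ltype.

Definition mtype := list ltype.

(* equality of linear / multi types (multisets compared up to reordering, deeply) *)
Inductive ltype_eq : ltype -> ltype -> Prop :=
| leq_n : ltype_eq Tn Tn
| leq_arr : forall M M' L L', mtype_eq M M' -> ltype_eq L L' -> ltype_eq (Arr M L) (Arr M' L')
with mtype_eq : mtype -> mtype -> Prop :=
| meq_nil : mtype_eq [] []
| meq_cons : forall a b l1 l2a l2b,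
    ltype_eq a b -> mtype_eq l1 (l2a ++ l2b) -> mtype_eq (a :: l1) (l2a ++ b :: l2b).

Definition ctx := nat -> mtype.
Definition ctx_empty : ctx := fun _ => [].
Definition ctx_union (G D : ctx) : ctx := fun x => G x ++ D x.
Definition ctx_single (x : nat) (L : ltype) : ctx :=
  fun y => if y =? x then [L] else [].
(* the context outside a binder for index 0:  (G \\ x) seen from outside the binder *)
Definition ctx_tail (G : ctx) : ctx := fun y => G (S y).

(* typed G t L m e  :  G |-^(m,e) t : L ;  mtyped G t M m e : G |-^(m,e) t : M *)
Inductive typed : ctx -> tm -> ltype -> nat -> nat -> Prop :=
| ty_ax : forall x L, typed (ctx_single x L) (Var x) L 0 1
| ty_axlam : forall t, typed ctx_empty (Lam t) Tn 0 0
| ty_lam : forall G t L m e,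
    typed G t L m e -> typed (ctx_tail G) (Lam t) (Arr (G 0) L) m e
| ty_app : forall G D t u M L M' m e m' e',
    typed G t (Arr M L) m e -> mtyped D u M' m' e' -> mtype_eq (M ++ [Tn]) M' ->
    typed (ctx_union G D) (App t u) L (m + m' + 1) (e + e')
| ty_es : forall G D t u L M' m e m' e',
    typed G t L m e -> mtyped D u M' m' e' -> mtype_eq (G 0 ++ [Tn]) M' ->
    typed (ctx_union (ctx_tail G) D) (ES t u) L (m + m') (e + e')
with mtyped : ctx -> tm -> mtype -> nat -> nat -> Prop :=
| ty_many_nil : forall t, mtyped ctx_empty t [] 0 0
| ty_many_cons : forall G D t L M m e m' e',
    typed G t L m e -> mtyped D t M m' e' ->
    mtyped (ctx_union G D) t (L :: M) (m + m') (e + e').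

(* Main.v *)
Require Import Defs.
From Stdlib Require Import List Arith.
From Stdlib Require Import Lia Permutation FunctionalExtensionality.
Import ListNotations.

Inductive E : ltype -> ltype -> Prop :=
| E_n : E Tn Tn
| E_arr : forall M M' M'' L L', LF M M'' -> Permutation M'' M' -> E L L' -> E (Arr M L) (Arr M' L')
with LF : list ltype -> list ltype -> Prop :=
| LF_nil : LF [] []
| LF_cons : forall a b l l', E a b -> LF l l' -> LF (a :: l) (b :: l').

Scheme E_mut := Induction for E Sort Prop with LF_mut := Induction for LF Sort Prop.
Combined Scheme E_LF_mut from E_mut, LF_mut.

Lemma LF_F2 : forall l l', LF l l' <-> Forall2 E l l'.
Proof.
  split.
  - induction 1; constructor; auto.
  - induction 1; constructor; auto.
Qed.

Lemma LF_perm : forall l1 l2, Permutation l1 l2 -> forall l3, LF l2 l3 ->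
  exists l4, LF l1 l4 /\ Permutation l4 l3.
Proof.
  intros l1 l2 P l3 H. apply LF_F2 in H.
  destruct (Permutation_Forall2 (Permutation_sym P) H) as [l4 [P2 F]].
  exists l4. split. apply LF_F2; auto. apply Permutation_sym; auto.
Qed.

Fixpoint E_refl (L : ltype) : E L L :=
  match L with
  | Tn => E_n
  | Arr M L' => E_arr M M M L' L'
      ((fix go (M : list ltype) : LF M M :=
         match M with [] => LF_nil | a :: l => LF_cons a a l l (E_refl a) (go l) end) M)
      (Permutation_refl M) (E_refl L')
  end.

Lemma LF_refl : forall l, LF l l.
Proof. induction l; constructor; auto using E_refl. Qed.

Lemma E_LF_trans :
  (forall a b, E a b -> forall c, E b c -> E a c) /\
  (forall l1 l2, LF l1 l2 -> forall l3, LF l2 l3 -> LF l1 l3).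
Proof.
  apply (E_LF_mut (fun a b _ => forall c, E b c -> E a c) (fun l1 l2 _ => forall l3, LF l2 l3 -> LF l1 l3)).
  - auto.
  - intros M M' M'' L L' HLF IH1 P HE IH2 c Hc. inversion Hc; subst.
    destruct (LF_perm _ _ P _ H1) as [l4 [Hl4 Pl4]].
    econstructor. apply IH1. exact Hl4. eapply perm_trans; eauto. auto.
  - auto.
  - intros a b l l' Hab IH1 Hl IH2 l3 H. inversion H; subst. constructor; auto.
Qed.

Lemma E_trans : forall a b c, E a b -> E b c -> E a c.
Proof. intros; eapply (proj1 E_LF_trans); eauto. Qed.
Lemma LF_trans : forall a b c, LF a b -> LF b c -> LF a c.
Proof. intros; eapply (proj2 E_LF_trans); eauto. Qed.

Lemma E_LF_sym :
  (forall a b, E a b -> E b a) /\ (forall l1 l2, LF l1 l2 -> LF l2 l1).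
Proof.
  apply (E_LF_mut (fun a b _ => E b a) (fun l1 l2 _ => LF l2 l1)).
  - constructor.
  - intros M M' M'' L L' HLF IH1 P HE IH2.
    destruct (LF_perm _ _ (Permutation_sym P) _ IH1) as [l4 [H4 P4]].
    econstructor; eauto.
  - constructor.
  - intros; constructor; auto.
Qed.
Lemma E_sym : forall a b, E a b -> E b a. Proof. apply E_LF_sym. Qed.
Lemma LF_sym : forall a b, LF a b -> LF b a. Proof. apply E_LF_sym. Qed.

Definition CE (l1 l2 : list ltype) : Prop := exists l, LF l1 l /\ Permutation l l2.

Lemma CE_refl : forall l, CE l l.
Proof. intro l; exists l; split; auto using LF_refl. Qed.
Lemma CE_perm : forall l l', Permutation l l' -> CE l l'.
Proof. intros; exists l; split; auto using LF_refl. Qed.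
Lemma CE_trans : forall a b c, CE a b -> CE b c -> CE a c.
Proof.
  intros a b c [x [H1 P1]] [y [H2 P2]].
  destruct (LF_perm _ _ P1 _ H2) as [z [H3 P3]].
  exists z; split. eapply LF_trans; eauto. eapply perm_trans; eauto.
Qed.
Lemma CE_sym : forall a b, CE a b -> CE b a.
Proof.
  intros a b [x [H1 P1]].
  destruct (LF_perm _ _ (Permutation_sym P1) _ (LF_sym _ _ H1)) as [z [H3 P3]].
  exists z; auto.
Qed.
Lemma LF_app : forall a b c d, LF a b -> LF c d -> LF (a ++ c) (b ++ d).
Proof. induction 1; simpl; auto; constructor; auto. Qed.
Lemma CE_app : forall a b c d, CE a b -> CE c d -> CE (a ++ c) (b ++ d).
Proof.
  intros a b c d [x [H1 P1]] [y [H2 P2]]. exists (x ++ y); split.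
  apply LF_app; auto. apply Permutation_app; auto.
Qed.
Lemma CE_cons : forall a b l l', E a b -> CE l l' -> CE (a :: l) (b :: l').
Proof.
  intros a b l l' H [x [H1 P1]]. exists (b :: x). split; constructor; auto.
Qed.
Lemma CE_nil_l : forall l, CE [] l -> l = [].
Proof. intros l [x [H P]]. inversion H; subst. apply Permutation_nil; auto. Qed.
Lemma CE_nil_r : forall l, CE l [] -> l = [].
Proof. intros l H. apply CE_nil_l. apply CE_sym; auto. Qed.
Lemma CE_single_l : forall a l, CE [a] l -> exists b, l = [b] /\ E a b.
Proof.
  intros a l [x [H P]]. inversion H; subst. inversion H4; subst.
  apply Permutation_length_1_inv in P. subst. eauto.
Qed.
Lemma E_arr_CE : forall M M' L L', CE M M' -> E L L' -> E (Arr M L) (Arr M' L').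
Proof. intros M M' L L' [x [H P]] H2. econstructor; eauto. Qed.
Lemma E_arr_inv : forall M L X, E (Arr M L) X -> exists M' L', X = Arr M' L' /\ CE M M' /\ E L L'.
Proof. intros M L X H; inversion H; subst. exists M', L'. split; auto. split; auto. exists M''; auto. Qed.
Lemma E_n_inv : forall X, E Tn X -> X = Tn.
Proof. intros X H; inversion H; auto. Qed.
Lemma E_n_inv_r : forall X, E X Tn -> X = Tn.
Proof. intros X H; inversion H; auto. Qed.
Lemma CE_nonempty : forall l l', CE l l' -> l <> [] -> l' <> [].
Proof. intros l l' H N E'. subst. apply CE_nil_r in H. auto. Qed.

Scheme ltype_eq_mut := Induction for ltype_eq Sort Prop with mtype_eq_mut := Induction for mtype_eq Sort Prop.
Combined Scheme eq_mut from ltype_eq_mut, mtype_eq_mut.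

Lemma frozen_eq : (forall a b, ltype_eq a b -> E a b) /\ (forall l l', mtype_eq l l' -> CE l l').
Proof.
  apply (eq_mut (fun a b _ => E a b) (fun l l' _ => CE l l')).
  - constructor.
  - intros; apply E_arr_CE; auto.
  - apply CE_refl.
  - intros a b l1 l2a l2b _ H1 _ H2.
    eapply CE_trans. apply CE_cons. exact H1. exact H2.
    apply CE_perm. apply Permutation_middle.
Qed.

Lemma pk_here : forall (x r : list ltype), Permutation (x ++ r) (x ++ r).
Proof. auto. Qed.
Lemma pk_last : forall (x : list ltype), Permutation x (x ++ []).
Proof. intros; rewrite app_nil_r; auto. Qed.
Lemma pk_there : forall (a r x r' : list ltype), Permutation r (x ++ r') -> Permutation (a ++ r) (x ++ (a ++ r')).
Proof.
  intros. eapply perm_trans. apply Permutation_app_head. exact H.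
  rewrite !app_assoc. apply Permutation_app_tail. apply Permutation_app_comm.
Qed.
Lemma ps_step : forall (x r R R' : list ltype), Permutation R (x ++ R') -> Permutation r R' -> Permutation (x ++ r) R.
Proof. intros. apply Permutation_sym. eapply perm_trans. exact H. apply Permutation_app_head. apply Permutation_sym; auto. Qed.
Lemma ps_last : forall (x R : list ltype), Permutation R (x ++ []) -> Permutation x R.
Proof. intros. rewrite app_nil_r in H. apply Permutation_sym; auto. Qed.

Ltac pick := first [ apply pk_here | apply pk_last | (apply pk_there; pick) ].
Ltac perm_solve :=
  repeat rewrite <- app_assoc; rewrite ?app_nil_r, ?app_nil_l;
  first [ apply Permutation_refl
        | (eapply ps_step; [ pick | perm_solve ])
        | (apply ps_last; pick) ].
Ltac ce_perm := apply CE_perm; perm_solve.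

Goal forall a b c d : list ltype, Permutation (a ++ (b ++ c) ++ d) (d ++ c ++ (a ++ b)).
intros. perm_solve. Qed.

Definition ceq (G G' : ctx) : Prop := forall y, CE (G y) (G' y).
Lemma ceq_refl : forall G, ceq G G. Proof. intros G y; apply CE_refl. Qed.
Lemma ceq_sym : forall G G', ceq G G' -> ceq G' G. Proof. intros G G' H y; apply CE_sym; auto. Qed.
Lemma ceq_trans : forall G1 G2 G3, ceq G1 G2 -> ceq G2 G3 -> ceq G1 G3.
Proof. intros G1 G2 G3 H1 H2 y; eapply CE_trans; eauto. Qed.

Inductive T : ctx -> tm -> ltype -> nat -> nat -> nat -> Prop :=
| tax : forall x L, T (ctx_single x L) (Var x) L 0 1 1
| taxlam : forall t, T ctx_empty (Lam t) Tn 0 0 1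
| tlam : forall G t L m e s, T G t L m e s -> T (ctx_tail G) (Lam t) (Arr (G 0) L) m e (S s)
| tapp : forall G D t u M L M' m e s m' e' s', T G t (Arr M L) m e s -> MT D u M' m' e' s' ->
    CE (M ++ [Tn]) M' -> T (ctx_union G D) (App t u) L (m+m'+1) (e+e') (s+s'+1)
| tes : forall G D t u L M' m e s m' e' s', T G t L m e s -> MT D u M' m' e' s' ->
    CE (G 0 ++ [Tn]) M' -> T (ctx_union (ctx_tail G) D) (ES t u) L (m+m') (e+e') (s+s'+1)
| tconv : forall G G' t L L' m e s, T G t L m e s -> ceq G G' -> E L L' -> T G' t L' m e s
with MT : ctx -> tm -> list ltype -> nat -> nat -> nat -> Prop :=
| mnil : forall t, MT ctx_empty t [] 0 0 0
| mcons : forall G D t L M m e s m' e' s', T G t L m e s -> MT D t M m' e' s' ->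
    MT (ctx_union G D) t (L :: M) (m+m') (e+e') (s+s')
| mconv : forall G G' t M m e s, MT G t M m e s -> ceq G G' -> MT G' t M m e s.

Scheme T_mut := Induction for T Sort Prop with MT_mut := Induction for MT Sort Prop.
Combined Scheme TMT_mut from T_mut, MT_mut.

Lemma T_ceq : forall G G' t L m e s, T G t L m e s -> ceq G G' -> T G' t L m e s.
Proof. intros. eapply tconv; eauto using E_refl. Qed.
Lemma T_E : forall G t L L' m e s, T G t L m e s -> E L L' -> T G t L' m e s.
Proof. intros. eapply tconv; eauto using ceq_refl. Qed.
Lemma T_eqm : forall G t L m e s m' e' s', T G t L m e s -> m = m' -> e = e' -> s = s' -> T G t L m' e' s'.
Proof. intros; subst; auto. Qed.
Lemma MT_eqm : forall G t L m e s m' e' s', MT G t L m e s -> m = m' -> e = e' -> s = s' -> MT G t L m' e' s'.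
Proof. intros; subst; auto. Qed.

Ltac ceq_pw := let y := fresh "y" in intro y; unfold ctx_union, ctx_tail, ctx_empty; simpl.

Lemma CE_nil_ceq : forall G, ceq G ctx_empty -> forall y, G y = [].
Proof. intros G H y. apply CE_nil_r. apply H. Qed.

Lemma inv_var : forall G t L m e s, T G t L m e s -> forall x, t = Var x ->
  m = 0 /\ e = 1 /\ s = 1 /\ exists L', E L' L /\ CE (G x) [L'] /\ forall y, y <> x -> G y = [].
Proof.
  induction 1; intros x0 Hq; try discriminate.
  - injection Hq; intros; subst. repeat split; auto. exists L; split. apply E_refl.
    unfold ctx_single. rewrite Nat.eqb_refl. split. apply CE_refl.
    intros y Hy. apply Nat.eqb_neq in Hy. rewrite Hy. auto.
  - destruct (IHT x0 Hq) as (? & ? & ? & L'' & H2 & H3 & H4). repeat split; auto.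
    exists L''. split. eapply E_trans; eauto. split.
    eapply CE_trans; [apply CE_sym, H0|auto].
    intros y Hy. apply CE_nil_l. rewrite <- (H4 y Hy). apply H0.
Qed.

Lemma inv_lam : forall G t L m e s, T G t L m e s -> forall b, t = Lam b ->
  (ceq G ctx_empty /\ E Tn L /\ m = 0 /\ e = 0 /\ s = 1) \/
  (exists G3 L3 s3, T G3 b L3 m e s3 /\ s = S s3 /\ ceq G (ctx_tail G3) /\ E (Arr (G3 0) L3) L).
Proof.
  induction 1; intros b Hq; try discriminate.
  - left. repeat split; auto using ceq_refl, E_refl.
  - injection Hq; intros; subst. right. exists G, L, s. repeat split; auto using ceq_refl, E_refl.
  - destruct (IHT b Hq) as [(? & ? & ?) | (G3 & L3 & s3 & ? & ? & ? & ?)].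
    + left. split. eapply ceq_trans; [apply ceq_sym|]; eauto. split; auto. eapply E_trans; eauto.
    + right. exists G3, L3, s3. repeat split; auto. eapply ceq_trans; [apply ceq_sym|]; eauto.
      eapply E_trans; eauto.
Qed.

Lemma inv_app : forall G t L m e s, T G t L m e s -> forall a u, t = App a u ->
  exists G1 D M L0 M' m1 e1 s1 m2 e2 s2, T G1 a (Arr M L0) m1 e1 s1 /\ MT D u M' m2 e2 s2 /\
   CE (M ++ [Tn]) M' /\ ceq G (ctx_union G1 D) /\ E L0 L /\ m = m1+m2+1 /\ e = e1+e2 /\ s = s1+s2+1.
Proof.
  induction 1; intros a0 u0 Hq; try discriminate.
  - injection Hq; intros; subst. do 11 eexists. repeat split; eauto using ceq_refl, E_refl.
  - destruct (IHT a0 u0 Hq) as (G1 & D & M & L0 & M' & m1 & e1 & s1 & m2 & e2 & s2 & ? & ? & ? & ? & ? & ? & ? & ?).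
    do 11 eexists. repeat split; eauto. eapply ceq_trans; [apply ceq_sym|]; eauto. eapply E_trans; eauto.
Qed.

Lemma inv_es : forall G t L m e s, T G t L m e s -> forall a u, t = ES a u ->
  exists G0 D L0 M' m1 e1 s1 m2 e2 s2, T G0 a L0 m1 e1 s1 /\ MT D u M' m2 e2 s2 /\
   CE (G0 0 ++ [Tn]) M' /\ ceq G (ctx_union (ctx_tail G0) D) /\ E L0 L /\ m = m1+m2 /\ e = e1+e2 /\ s = s1+s2+1.
Proof.
  induction 1; intros a0 u0 Hq; try discriminate.
  - injection Hq; intros; subst. do 10 eexists. repeat split; eauto using ceq_refl, E_refl.
  - destruct (IHT a0 u0 Hq) as (G1 & D & L0 & M' & m1 & e1 & s1 & m2 & e2 & s2 & ? & ? & ? & ? & ? & ? & ? & ?).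
    do 10 eexists. repeat split; eauto. eapply ceq_trans; [apply ceq_sym|]; eauto. eapply E_trans; eauto.
Qed.

Lemma mt_nil_inv : forall G t M m e s, MT G t M m e s -> M = [] -> ceq G ctx_empty /\ m = 0 /\ e = 0 /\ s = 0.
Proof.
  induction 1; intros Hq; try discriminate.
  - repeat split; auto using ceq_refl.
  - destruct (IHMT Hq) as (? & ? & ? & ?). repeat split; auto. eapply ceq_trans; [apply ceq_sym|]; eauto.
Qed.

Lemma mt_cons_inv : forall G t M m e s, MT G t M m e s -> forall L M0, M = L :: M0 ->
  exists G1 D m1 e1 s1 m2 e2 s2, T G1 t L m1 e1 s1 /\ MT D t M0 m2 e2 s2 /\ ceq G (ctx_union G1 D) /\
   m = m1+m2 /\ e = e1+e2 /\ s = s1+s2.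
Proof.
  induction 1; intros L1 M1 Hq; try discriminate.
  - injection Hq; intros; subst. do 8 eexists. repeat split; eauto using ceq_refl.
  - destruct (IHMT L1 M1 Hq) as (G1 & D & m1 & e1 & s1 & m2 & e2 & s2 & ? & ? & ? & ? & ? & ?).
    do 8 eexists. repeat split; eauto. eapply ceq_trans; [apply ceq_sym|]; eauto.
Qed.

Lemma mt_nil : forall G t, ceq G ctx_empty -> MT G t [] 0 0 0.
Proof. intros. eapply mconv. apply mnil. apply ceq_sym; auto. Qed.

Lemma mt_single : forall G t L m e s, T G t L m e s -> MT G t [L] m e s.
Proof.
  intros. eapply mconv. eapply MT_eqm. eapply mcons. exact H. apply mnil. lia. lia. lia.
  ceq_pw. rewrite app_nil_r. apply CE_refl.
Qed.

Lemma mt_single_inv : forall G t L m e s, MT G t [L] m e s -> T G t L m e s.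
Proof.
  intros. destruct (mt_cons_inv _ _ _ _ _ _ H L [] eq_refl) as (G1 & D & m1 & e1 & s1 & m2 & e2 & s2 & HT & HM & Hc & ? & ? & ?).
  destruct (mt_nil_inv _ _ _ _ _ _ HM eq_refl) as (Hn & ? & ? & ?). subst.
  eapply T_ceq. eapply T_eqm; eauto; lia.
  intro y. eapply CE_trans; [| apply CE_sym, Hc]. unfold ctx_union. rewrite (CE_nil_ceq _ Hn). rewrite app_nil_r. apply CE_refl.
Qed.

Lemma mt_join : forall A G1 t m1 e1 s1, MT G1 t A m1 e1 s1 -> forall B G2 m2 e2 s2, MT G2 t B m2 e2 s2 ->
  MT (ctx_union G1 G2) t (A ++ B) (m1+m2) (e1+e2) (s1+s2).
Proof.
  induction A; intros.
  - destruct (mt_nil_inv _ _ _ _ _ _ H eq_refl) as (? & ? & ? & ?). subst. simpl.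
    eapply mconv; eauto. ceq_pw. rewrite (CE_nil_ceq _ H1). apply CE_refl.
  - destruct (mt_cons_inv _ _ _ _ _ _ H a A eq_refl) as (G1a & D & m1a & e1a & s1a & m2a & e2a & s2a & ? & ? & ? & ? & ? & ?).
    subst. simpl. eapply mconv. eapply MT_eqm. eapply mcons. eauto. eapply IHA; eauto. lia. lia. lia.
    intro y. apply CE_sym. eapply CE_trans. unfold ctx_union at 1. apply CE_app. apply H3. apply CE_refl.
    unfold ctx_union. ce_perm.
Qed.

Lemma mt_split : forall A B G t m e s, MT G t (A ++ B) m e s ->
  exists G1 G2 m1 e1 s1 m2 e2 s2, MT G1 t A m1 e1 s1 /\ MT G2 t B m2 e2 s2 /\ ceq G (ctx_union G1 G2) /\
   m = m1+m2 /\ e = e1+e2 /\ s = s1+s2.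
Proof.
  induction A; intros.
  - exists ctx_empty, G, 0, 0, 0, m, e, s. simpl in H. repeat split; auto. apply mnil. apply ceq_refl.
  - simpl in H. destruct (mt_cons_inv _ _ _ _ _ _ H a (A ++ B) eq_refl) as (G1a & D & m1a & e1a & s1a & m2a & e2a & s2a & HT1 & HM1 & Hc1 & Hm1 & He1 & Hs1).
    destruct (IHA _ _ _ _ _ _ HM1) as (Ga & Gb & ma & ea & sa & mb & eb & sb & HMa & HMb & Hc2 & Hm2 & He2 & Hs2).
    subst. exists (ctx_union G1a Ga), Gb, (m1a + ma), (e1a+ea), (s1a+sa), mb, eb, sb.
    split; [apply mcons; auto|]. split; [auto|]. split; [|lia].
    intro y. eapply CE_trans. apply Hc1. unfold ctx_union. eapply CE_trans. apply CE_app. apply CE_refl. apply Hc2.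
    ce_perm.
Qed.

Lemma mt_LF : forall M M', LF M M' -> forall G t m e s, MT G t M m e s -> MT G t M' m e s.
Proof.
  induction 1; intros; auto.
  destruct (mt_cons_inv _ _ _ _ _ _ H1 a l eq_refl) as (G1 & D & m1 & e1 & s1 & m2 & e2 & s2 & ? & ? & ? & ? & ? & ?).
  subst. eapply mconv. apply mcons. eapply T_E; eauto. eapply IHLF; eauto. apply ceq_sym; auto.
Qed.

Lemma mt_perm : forall M M', Permutation M M' -> forall G t m e s, MT G t M m e s -> MT G t M' m e s.
Proof.
  induction 1; intros; auto.
  - destruct (mt_cons_inv _ _ _ _ _ _ H0 x l eq_refl) as (G1 & D & m1 & e1 & s1 & m2 & e2 & s2 & HT1 & HM1 & Hc1 & ? & ? & ?).
    subst. eapply mconv. apply mcons. eauto. eapply IHPermutation; eauto. apply ceq_sym; auto.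
  - destruct (mt_cons_inv _ _ _ _ _ _ H y (x :: l) eq_refl) as (G1 & D & m1 & e1 & s1 & m2 & e2 & s2 & HT1 & HM1 & Hc1 & ? & ? & ?).
    destruct (mt_cons_inv _ _ _ _ _ _ HM1 x l eq_refl) as (G1' & D' & m1' & e1' & s1' & m2' & e2' & s2' & HT2 & HM2 & Hc2 & ? & ? & ?).
    subst. eapply mconv. eapply MT_eqm. apply mcons. exact HT2. apply mcons. exact HT1. exact HM2. lia. lia. lia.
    intro y0. apply CE_sym. eapply CE_trans. apply Hc1. unfold ctx_union. eapply CE_trans. apply CE_app. apply CE_refl. apply Hc2.
    ce_perm.
Qed.

Lemma mt_CE : forall G t M M' m e s, MT G t M m e s -> CE M M' -> MT G t M' m e s.
Proof. intros G t M M' m e s H [x [H1 P]]. eapply mt_perm; eauto. eapply mt_LF; eauto. Qed.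

Definition shiftc (k c : nat) (G : ctx) : ctx :=
  fun y => if y <? c then G y else if y <? c + k then [] else G (y - k).

Lemma ceq_of_eq : forall G G', (forall y, G y = G' y) -> ceq G G'.
Proof. intros G G' H y. rewrite H. apply CE_refl. Qed.

Ltac arith_cases :=
  repeat match goal with
  | |- context [?a <? ?b] => destruct (Nat.ltb_spec a b)
  | |- context [?a =? ?b] => destruct (Nat.eqb_spec a b)
  | |- context [?a <=? ?b] => destruct (Nat.leb_spec a b)
  end; try lia; try reflexivity; try (repeat f_equal; lia).

Ltac pw_eq := apply ceq_of_eq; let y := fresh "y" in intro y;
  unfold shiftc, ctx_single, ctx_union, ctx_tail, ctx_empty; cbv beta; rewrite ?app_nil_l, ?app_nil_r; arith_cases.

Lemma ceq_tail : forall G G', ceq G G' -> ceq (ctx_tail G) (ctx_tail G').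
Proof. intros G G' H y. apply H. Qed.
Lemma ceq_union : forall A A' B B', ceq A A' -> ceq B B' -> ceq (ctx_union A B) (ctx_union A' B').
Proof. intros A A' B B' H1 H2 y. apply CE_app; auto. Qed.

Lemma shiftc_ceq : forall G G' k c, ceq G G' -> ceq (shiftc k c G) (shiftc k c G').
Proof.
  intros G G' k c H y. unfold shiftc. destruct (y <? c); auto. destruct (y <? c + k); auto. apply CE_refl.
Qed.

Lemma T_lift :
  (forall G t L m e s, T G t L m e s -> forall k c, T (shiftc k c G) (lift k c t) L m e s) /\
  (forall G t M m e s, MT G t M m e s -> forall k c, MT (shiftc k c G) (lift k c t) M m e s).
Proof.
  apply (TMT_mut (fun G t L m e s _ => forall k c, T (shiftc k c G) (lift k c t) L m e s)
                 (fun G t M m e s _ => forall k c, MT (shiftc k c G) (lift k c t) M m e s)).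
  - intros x L k c. simpl. destruct (Nat.leb_spec c x).
    + eapply T_ceq. apply tax. pw_eq.
    + eapply T_ceq. apply tax. pw_eq.
  - intros t k c. simpl. eapply T_ceq. apply taxlam. pw_eq.
  - intros G t L m e s _ IH k c. simpl. eapply T_ceq. apply (tlam _ _ _ _ _ _ (IH k (S c))). pw_eq.
  - intros G D t u M L M' m e s m' e' s' _ IH1 _ IH2 HC k c. simpl.
    eapply T_ceq. eapply tapp. apply IH1. apply IH2. auto. pw_eq.
  - intros G D t u L M' m e s m' e' s' _ IH1 _ IH2 HC k c. simpl.
    eapply T_ceq. eapply tes. apply (IH1 k (S c)). apply IH2. auto. pw_eq.
  - intros G G' t L L' m e s _ IH HG HL k c. eapply tconv. apply IH. apply shiftc_ceq; auto. auto.
  - intros t k c. eapply mconv. apply mnil. pw_eq.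
  - intros G D t L M m e s m' e' s' _ IH1 _ IH2 k c. eapply mconv. apply mcons. apply IH1. apply IH2. pw_eq.
  - intros G G' t M m e s _ IH HG k c. eapply mconv. apply IH. apply shiftc_ceq; auto.
Qed.

Lemma T_lift_inv :
  (forall G t L m e s, T G t L m e s -> forall k c t0, t = lift k c t0 ->
     exists G0, T G0 t0 L m e s /\ ceq G (shiftc k c G0)) /\
  (forall G t M m e s, MT G t M m e s -> forall k c t0, t = lift k c t0 ->
     exists G0, MT G0 t0 M m e s /\ ceq G (shiftc k c G0)).
Proof.
  apply (TMT_mut (fun G t L m e s _ => forall k c t0, t = lift k c t0 ->
     exists G0, T G0 t0 L m e s /\ ceq G (shiftc k c G0))
                 (fun G t M m e s _ => forall k c t0, t = lift k c t0 ->
     exists G0, MT G0 t0 M m e s /\ ceq G (shiftc k c G0))).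
  - intros x L k c t0 Hq. destruct t0; simpl in Hq; try discriminate.
    exists (ctx_single n L). split. apply tax.
    destruct (Nat.leb_spec c n); injection Hq; intros; subst; pw_eq.
  - intros t k c t0 Hq. destruct t0; simpl in Hq; try discriminate.
    destruct (c <=? n); discriminate.
    exists ctx_empty. split. apply taxlam. pw_eq.
  - intros G t L m e s _ IH k c t0 Hq. destruct t0; simpl in Hq; try discriminate.
    destruct (c <=? n); discriminate.
    injection Hq; intros; subst. destruct (IH k (S c) t0 eq_refl) as (G0 & HT & Hc).
    exists (ctx_tail G0). split.
    + eapply T_E. apply tlam. exact HT. apply E_arr_CE. apply CE_sym. apply (Hc 0). apply E_refl.
    + eapply ceq_trans. apply ceq_tail, Hc. pw_eq.
  - intros G D t u M L M' m e s m' e' s' _ IH1 _ IH2 HC k c t0 Hq.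
    destruct t0; simpl in Hq; try discriminate. destruct (c <=? n); discriminate.
    injection Hq; intros; subst.
    destruct (IH1 k c t0_1 eq_refl) as (G1 & HT1 & Hc1).
    destruct (IH2 k c t0_2 eq_refl) as (G2 & HT2 & Hc2).
    exists (ctx_union G1 G2). split. eapply tapp; eauto.
    eapply ceq_trans. apply ceq_union; eauto. pw_eq.
  - intros G D t u L M' m e s m' e' s' _ IH1 _ IH2 HC k c t0 Hq.
    destruct t0; simpl in Hq; try discriminate. destruct (c <=? n); discriminate.
    injection Hq; intros; subst.
    destruct (IH1 k (S c) t0_1 eq_refl) as (G1 & HT1 & Hc1).
    destruct (IH2 k c t0_2 eq_refl) as (G2 & HT2 & Hc2).
    exists (ctx_union (ctx_tail G1) G2). split. eapply tes; eauto.
    eapply CE_trans; [|exact HC]. apply CE_app; [|apply CE_refl]. apply CE_sym. apply (Hc1 0).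
    eapply ceq_trans. apply ceq_union. apply ceq_tail. eauto. eauto. pw_eq.
  - intros G G' t L L' m e s _ IH HG HL k c t0 Hq.
    destruct (IH k c t0 Hq) as (G0 & HT & Hc). exists G0. split. eapply T_E; eauto.
    eapply ceq_trans; [apply ceq_sym|]; eauto.
  - intros t k c t0 Hq. exists ctx_empty. split. apply mnil. pw_eq.
  - intros G D t L M m e s m' e' s' _ IH1 _ IH2 k c t0 Hq.
    destruct (IH1 k c t0 Hq) as (G1 & HT1 & Hc1).
    destruct (IH2 k c t0 Hq) as (G2 & HT2 & Hc2).
    exists (ctx_union G1 G2). split. apply mcons; auto.
    eapply ceq_trans. apply ceq_union; eauto. pw_eq.
  - intros G G' t M m e s _ IH HG k c t0 Hq.
    destruct (IH k c t0 Hq) as (G0 & HT & Hc). exists G0. split. auto.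
    eapply ceq_trans; [apply ceq_sym|]; eauto.
Qed.

Lemma plugS : forall S G t L m e s, T G (fillS S t) L m e s ->
  exists G1 G2 L2 m1 e1 s1 m2 e2 s2, T G2 t L2 m2 e2 s2 /\ E L2 L /\ m = m1+m2 /\ e = e1+e2 /\ s = s1+s2 /\
   ceq G (fun y => G1 y ++ G2 (y + depthS S)) /\
   forall G2' t' L' m2' e2' s2', T G2' t' L' m2' e2' s2' -> (forall y, y < depthS S -> CE (G2' y) (G2 y)) ->
     T (fun y => G1 y ++ G2' (y + depthS S)) (fillS S t') L' (m1+m2') (e1+e2') (s1+s2').
Proof.
  induction S as [|S0 IHS u]; intros G t L m e s H; simpl in *.
  - exists ctx_empty, G, L, 0, 0, 0, m, e, s. repeat split; auto using E_refl.
    + pw_eq.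
    + intros. eapply T_ceq. eauto. pw_eq.
  - destruct (inv_es _ _ _ _ _ _ H _ _ eq_refl) as (G0 & D & L0 & M' & m0 & e0 & s0 & mu & eu & su & HT0 & HM & HC & Hc & HE & Hm & He & Hs).
    destruct (IHS _ _ _ _ _ _ HT0) as (G1 & G2 & L2 & m1 & e1 & s1 & m2 & e2 & s2 & HT2 & HE2 & Hm2 & He2 & Hs2 & Hc2 & Hplug).
    exists (fun y => G1 (S y) ++ D y), G2, L2, (m1 + mu), (e1 + eu), (s1 + su + 1), m2, e2, s2.
    split; auto. split. eapply E_trans; eauto. split. lia. split. lia. split. lia. split.
    + eapply ceq_trans. exact Hc. eapply ceq_trans. apply ceq_union. apply ceq_tail. exact Hc2. apply ceq_refl.
      intro y. unfold ctx_union, ctx_tail. simpl. rewrite <- plus_n_Sm. ce_perm.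
    + intros G2' t' L' m2' e2' s2' HT' Hy.
      eapply T_eqm. eapply T_ceq. eapply tes. apply Hplug. exact HT'. intros; apply Hy; lia. exact HM.
      eapply CE_trans; [|exact HC]. apply CE_app; [|apply CE_refl].
      eapply CE_trans; [|apply CE_sym, (Hc2 0)]. apply CE_app. apply CE_refl. apply Hy. lia.
      intro y. unfold ctx_union, ctx_tail. simpl. rewrite <- plus_n_Sm. ce_perm.
      lia. lia. lia.
Qed.

Definition PlugT (d : nat) (F : tm -> tm) (t : tm) (G : ctx) (L : ltype) (m e s : nat) : Prop :=
  exists G1 G2 Mh m1 e1 s1 m2 e2 s2, MT G2 t Mh m2 e2 s2 /\ Mh <> [] /\ m = m1+m2 /\ e = e1+e2 /\ s = s1+s2 /\
   ceq G (fun y => G1 y ++ G2 (y + d)) /\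
   forall G2' t' m2' e2' s2', MT G2' t' Mh m2' e2' s2' -> (forall y, y < d -> G2 y = []) ->
     (forall y, y < d -> G2' y = []) ->
     T (fun y => G1 y ++ G2' (y + d)) (F t') L (m1+m2') (e1+e2') (s1+s2').

Definition PlugMT (d : nat) (F : tm -> tm) (t : tm) (G : ctx) (Ms : list ltype) (m e s : nat) : Prop :=
  exists G1 G2 Mh m1 e1 s1 m2 e2 s2, MT G2 t Mh m2 e2 s2 /\ (Ms <> [] -> Mh <> []) /\ m = m1+m2 /\ e = e1+e2 /\ s = s1+s2 /\
   ceq G (fun y => G1 y ++ G2 (y + d)) /\
   forall G2' t' m2' e2' s2', MT G2' t' Mh m2' e2' s2' -> (forall y, y < d -> G2 y = []) ->
     (forall y, y < d -> G2' y = []) ->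
     MT (fun y => G1 y ++ G2' (y + d)) (F t') Ms (m1+m2') (e1+e2') (s1+s2').

Lemma plugMT_of_T : forall d F t, (forall G L m e s, T G (F t) L m e s -> PlugT d F t G L m e s) ->
  forall Ms G m e s, MT G (F t) Ms m e s -> PlugMT d F t G Ms m e s.
Proof.
  intros d F t HP. induction Ms; intros G m e s H.
  - destruct (mt_nil_inv _ _ _ _ _ _ H eq_refl) as (Hn & ? & ? & ?). subst.
    exists ctx_empty, ctx_empty, [], 0, 0, 0, 0, 0, 0. split. apply mnil. split. congruence.
    split. auto. split. auto. split. auto. split.
    + eapply ceq_trans. exact Hn. pw_eq.
    + intros G2' t' m2' e2' s2' HM _ _. destruct (mt_nil_inv _ _ _ _ _ _ HM eq_refl) as (Hn' & ? & ? & ?). subst.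
      apply mt_nil. intro y. simpl. rewrite (CE_nil_ceq _ Hn'). apply CE_refl.
  - destruct (mt_cons_inv _ _ _ _ _ _ H a Ms eq_refl) as (Ga & Gb & ma & ea & sa & mb & eb & sb & HTa & HMb & Hc & Hm & He & Hs).
    destruct (HP _ _ _ _ _ HTa) as (G1a & G2a & Mha & m1a & e1a & s1a & m2a & e2a & s2a & HM2a & Hne & ? & ? & ? & Hca & Hpa).
    destruct (IHMs _ _ _ _ HMb) as (G1b & G2b & Mhb & m1b & e1b & s1b & m2b & e2b & s2b & HM2b & Hneb & ? & ? & ? & Hcb & Hpb).
    exists (ctx_union G1a G1b), (ctx_union G2a G2b), (Mha ++ Mhb), (m1a+m1b), (e1a+e1b), (s1a+s1b), (m2a+m2b), (e2a+e2b), (s2a+s2b).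
    split. apply mt_join; auto. split. intros _. destruct Mha; simpl; congruence.
    split. lia. split. lia. split. lia. split.
    + eapply ceq_trans. exact Hc. eapply ceq_trans. apply ceq_union. exact Hca. exact Hcb.
      intro y. unfold ctx_union. ce_perm.
    + intros G2' t' m2' e2' s2' HM' Hy2 Hy2'.
      destruct (mt_split _ _ _ _ _ _ _ HM') as (Ga' & Gb' & ma' & ea' & sa' & mb' & eb' & sb' & HMa' & HMb' & Hc' & ? & ? & ?).
      assert (Hz : forall y, y < d -> Ga' y = [] /\ Gb' y = []).
      { intros y Hy. pose proof (Hc' y) as Q. rewrite (Hy2' y Hy) in Q. apply CE_nil_l in Q.
        apply app_eq_nil in Q. auto. }
      assert (Hz2 : forall y, y < d -> G2a y = [] /\ G2b y = []).
      { intros y Hy. pose proof (Hy2 y Hy) as Q. unfold ctx_union in Q. apply app_eq_nil in Q. auto. }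
      eapply MT_eqm. eapply mconv. apply mcons.
      apply (Hpa _ _ _ _ _ HMa'). intros; apply Hz2; auto. intros; apply Hz; auto.
      apply (Hpb _ _ _ _ _ HMb'). intros; apply Hz2; auto. intros; apply Hz; auto.
      intro y. unfold ctx_union. eapply CE_trans.
      2:{ apply CE_app. apply CE_refl. apply CE_sym. apply (Hc' (y + d)). }
      unfold ctx_union. ce_perm.
      lia. lia. lia.
Qed.

Lemma plugW : forall W t G L m e s, T G (fillW W t) L m e s -> PlugT (depthW W) (fillW W) t G L m e s.
Proof.
  induction W as [| W IH u | u W IH | u W IH | W IH u]; intros t G L m e s H; simpl in *.
  - exists ctx_empty, G, [L], 0, 0, 0, m, e, s. split. apply mt_single; auto. split. congruence.
    split. auto. split. auto. split. auto. split. pw_eq.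
    intros G2' t' m2' e2' s2' HM _ _. apply mt_single_inv in HM. eapply T_ceq. eauto. pw_eq.
  - destruct (inv_app _ _ _ _ _ _ H _ _ eq_refl) as (G0 & D & M & L0 & M' & m0 & e0 & s0 & mu & eu & su & HT0 & HM & HC & Hc & HE & Hm & He & Hs).
    destruct (IH _ _ _ _ _ _ HT0) as (G1 & G2 & Mh & m1 & e1 & s1 & m2 & e2 & s2 & HM2 & Hne & ? & ? & ? & Hc2 & Hp).
    exists (ctx_union G1 D), G2, Mh, (m1 + mu + 1), (e1 + eu), (s1 + su + 1), m2, e2, s2.
    split. auto. split. auto. split. lia. split. lia. split. lia. split.
    + eapply ceq_trans. exact Hc. eapply ceq_trans. apply ceq_union. exact Hc2. apply ceq_refl.
      intro y. unfold ctx_union. ce_perm.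
    + intros G2' t' m2' e2' s2' HM' Hz Hz'.
      eapply T_eqm. eapply tconv. eapply tapp. apply Hp; eauto. exact HM. exact HC.
      2: exact HE. intro y. unfold ctx_union. ce_perm. lia. lia. lia.
  - destruct (inv_app _ _ _ _ _ _ H _ _ eq_refl) as (G0 & D & M & L0 & M' & m0 & e0 & s0 & mu & eu & su & HT0 & HM & HC & Hc & HE & Hm & He & Hs).
    assert (HPM := plugMT_of_T _ _ _ (IH t) _ _ _ _ _ HM).
    destruct HPM as (G1 & G2 & Mh & m1 & e1 & s1 & m2 & e2 & s2 & HM2 & Hne & ? & ? & ? & Hc2 & Hp).
    exists (ctx_union G0 G1), G2, Mh, (m0 + m1 + 1), (e0 + e1), (s0 + s1 + 1), m2, e2, s2.
    split. auto. split. apply Hne. eapply CE_nonempty. exact HC. destruct M; simpl; congruence.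
    split. lia. split. lia. split. lia. split.
    + eapply ceq_trans. exact Hc. eapply ceq_trans. apply ceq_union. apply ceq_refl. exact Hc2.
      intro y. unfold ctx_union. ce_perm.
    + intros G2' t' m2' e2' s2' HM' Hz Hz'.
      eapply T_eqm. eapply tconv. eapply tapp. exact HT0. apply Hp; eauto. exact HC.
      2: exact HE. intro y. unfold ctx_union. ce_perm. lia. lia. lia.
  - destruct (inv_es _ _ _ _ _ _ H _ _ eq_refl) as (G0 & D & L0 & M' & m0 & e0 & s0 & mu & eu & su & HT0 & HM & HC & Hc & HE & Hm & He & Hs).
    assert (HPM := plugMT_of_T _ _ _ (IH t) _ _ _ _ _ HM).
    destruct HPM as (G1 & G2 & Mh & m1 & e1 & s1 & m2 & e2 & s2 & HM2 & Hne & ? & ? & ? & Hc2 & Hp).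
    exists (ctx_union (ctx_tail G0) G1), G2, Mh, (m0 + m1), (e0 + e1), (s0 + s1 + 1), m2, e2, s2.
    split. auto. split. apply Hne. eapply CE_nonempty. exact HC. destruct (G0 0); simpl; congruence.
    split. lia. split. lia. split. lia. split.
    + eapply ceq_trans. exact Hc. eapply ceq_trans. apply ceq_union. apply ceq_refl. exact Hc2.
      intro y. unfold ctx_union. ce_perm.
    + intros G2' t' m2' e2' s2' HM' Hz Hz'.
      eapply T_eqm. eapply tconv. eapply tes. exact HT0. apply Hp; eauto. exact HC.
      2: exact HE. intro y. unfold ctx_union, ctx_tail. ce_perm. lia. lia. lia.
  - destruct (inv_es _ _ _ _ _ _ H _ _ eq_refl) as (G0 & D & L0 & M' & m0 & e0 & s0 & mu & eu & su & HT0 & HM & HC & Hc & HE & Hm & He & Hs).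
    destruct (IH _ _ _ _ _ _ HT0) as (G1 & G2 & Mh & m1 & e1 & s1 & m2 & e2 & s2 & HM2 & Hne & ? & ? & ? & Hc2 & Hp).
    exists (fun y => G1 (S y) ++ D y), G2, Mh, (m1 + mu), (e1 + eu), (s1 + su + 1), m2, e2, s2.
    split. auto. split. auto. split. lia. split. lia. split. lia. split.
    + eapply ceq_trans. exact Hc. eapply ceq_trans. apply ceq_union. apply ceq_tail. exact Hc2. apply ceq_refl.
      intro y. unfold ctx_union, ctx_tail. simpl. rewrite <- plus_n_Sm. ce_perm.
    + intros G2' t' m2' e2' s2' HM' Hz Hz'.
      eapply T_eqm. eapply tconv. eapply tes. apply Hp. exact HM'. intros; apply Hz; lia. intros; apply Hz'; lia. exact HM.
      eapply CE_trans; [|exact HC]. apply CE_app; [|apply CE_refl].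
      eapply CE_trans; [|apply CE_sym, (Hc2 0)]. simpl. rewrite (Hz (depthW W)), (Hz' (depthW W)) by lia. apply CE_refl.
      intro y. unfold ctx_union, ctx_tail. simpl. rewrite <- plus_n_Sm. ce_perm.
      exact HE. lia. lia. lia.
Qed.

Lemma plugW_MT : forall W t Ms G m e s, MT G (fillW W t) Ms m e s -> PlugMT (depthW W) (fillW W) t G Ms m e s.
Proof. intros W t. apply plugMT_of_T. intros. apply plugW; auto. Qed.

Definition dec (k : kind) (m e s m' e' s' : nat) : Prop :=
  s' < s /\ m' <= m /\ e' <= e /\ (k = Km -> m' < m) /\ (k = Ke -> e' < e).

Lemma mt_var : forall Mh G x m e s, MT G (Var x) Mh m e s ->
  m = 0 /\ e = length Mh /\ s = length Mh /\ CE (G x) Mh /\ forall y, y <> x -> G y = [].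
Proof.
  induction Mh; intros G x m e s H.
  - destruct (mt_nil_inv _ _ _ _ _ _ H eq_refl) as (Hn & ? & ? & ?). subst.
    split. auto. split. auto. split. auto. split. rewrite (CE_nil_ceq _ Hn). apply CE_refl. intros; apply CE_nil_ceq; auto.
  - destruct (mt_cons_inv _ _ _ _ _ _ H a Mh eq_refl) as (Ga & Gb & ma & ea & sa & mb & eb & sb & HTa & HMb & Hc & Hm & He & Hs).
    destruct (inv_var _ _ _ _ _ _ HTa x eq_refl) as (? & ? & ? & L' & HE' & HCa & Hza).
    destruct (IHMh _ _ _ _ _ HMb) as (? & ? & ? & HCb & Hzb). subst.
    split. lia. split. simpl; lia. split. simpl; lia. split.
    + eapply CE_trans. apply Hc. unfold ctx_union. change (a :: Mh) with ([a] ++ Mh).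
      apply CE_app; auto. eapply CE_trans. exact HCa. apply CE_cons; auto using CE_refl.
    + intros y Hy. pose proof (Hc y) as Q. unfold ctx_union in Q. rewrite (Hza y Hy), (Hzb y Hy) in Q.
      apply CE_nil_r; auto.
Qed.

Lemma root_sr : forall k r r', root k r r' -> forall G L m e s, T G r L m e s ->
  exists G' m' e' s', T G' r' L m' e' s' /\ ceq G G' /\ dec k m e s m' e' s'.
Proof.
  intros k r r' HR. destruct HR as [S0 t u | W u | S0 t0 v]; intros G L m e s H.
  -
    destruct (inv_app _ _ _ _ _ _ H _ _ eq_refl) as (G1 & D & M & L0 & M' & m1 & e1 & s1 & mu & eu & su & HT1 & HM & HC & Hc & HE & Hm & He & Hs).
    destruct (plugS _ _ _ _ _ _ _ HT1) as (Gs & G2 & L2 & ms & es & ss & m2 & e2 & s2 & HT2 & HE2 & Hm2 & He2 & Hs2 & Hc2 & Hplug).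
    destruct (inv_lam _ _ _ _ _ _ HT2 t eq_refl) as [(_ & HEn & _) | (G3 & L3 & s3 & HT3 & Hs3 & Hc3 & HE3)].
    { pose proof (E_trans _ _ _ HEn HE2) as Q. apply E_n_inv in Q. discriminate. }
    pose proof (E_trans _ _ _ HE3 HE2) as Q. apply E_arr_inv in Q. destruct Q as (M0 & L4 & Heq & HCM & HEL).
    injection Heq; intros; subst M0 L4.
    set (d := depthS S0) in *.
    pose proof ((proj2 T_lift) _ _ _ _ _ _ HM d 0) as HMl.
    assert (HTes : T (ctx_union (ctx_tail G3) (shiftc d 0 D)) (ES t (lift d 0 u)) L3 (m2 + mu) (e2 + eu) (s3 + su + 1)).
    { eapply tes. exact HT3. exact HMl. eapply CE_trans; [|exact HC]. apply CE_app; auto using CE_refl. }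
    pose proof (Hplug _ _ _ _ _ _ HTes) as HP.
    eexists _, _, _, _. split. eapply tconv. apply HP.
    + intros y Hy. unfold ctx_union, ctx_tail, shiftc. arith_cases. rewrite app_nil_r. apply CE_sym. apply Hc3.
    + apply ceq_refl.
    + eapply E_trans; eauto.
    + split.
      * eapply ceq_trans. exact Hc. eapply ceq_trans. apply ceq_union. exact Hc2. apply ceq_refl.
        intro y. unfold ctx_union. eapply CE_trans. apply CE_app. apply CE_app. apply CE_refl. apply (Hc3 (y + d)). apply CE_refl.
        unfold ctx_tail, shiftc. arith_cases. replace (y + d - d) with y by lia. ce_perm.
      * unfold dec. subst. repeat split; intros; try lia. discriminate.
  -
    unfold fillWc in *. simpl in H |- *.
    destruct (inv_es _ _ _ _ _ _ H _ _ eq_refl) as (G0 & D & L0 & M' & m0 & e0 & s0 & mu & eu & su & HT0 & HM & HC & Hc & HE & Hm & He & Hs).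
    destruct (plugW _ _ _ _ _ _ _ HT0) as (G1 & G2 & Mh & m1 & e1 & s1 & m2 & e2 & s2 & HM2 & Hne & Hm2 & He2 & Hs2 & Hc2 & Hp).
    set (d := depthW W) in *.
    destruct (mt_var _ _ _ _ _ _ HM2) as (? & ? & ? & HCv & Hzv).
    assert (HCM : CE M' (Mh ++ (G1 0 ++ [Tn]))).
    { eapply CE_trans. apply CE_sym, HC. eapply CE_trans. apply CE_app. apply (Hc2 0). apply CE_refl.
      eapply CE_trans. apply CE_app. apply CE_app. apply CE_refl. exact HCv. apply CE_refl. ce_perm. }
    pose proof (mt_CE _ _ _ _ _ _ _ HM HCM) as HM3.
    destruct (mt_split _ _ _ _ _ _ _ HM3) as (Da & Db & ma & ea & sa & mb & eb & sb & HMa & HMb & Hcd & ? & ? & ?).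
    pose proof ((proj2 T_lift) _ _ _ _ _ _ HMa 1 0) as HMa1.
    pose proof ((proj2 T_lift) _ _ _ _ _ _ HMa1 d 0) as HMa2.
    pose proof (Hp _ _ _ _ _ HMa2) as HP.
    assert (HP' : T (fun y => G1 y ++ shiftc d 0 (shiftc 1 0 Da) (y + d)) (fillW W (lift d 0 (lift 1 0 u))) L0 (m1 + ma) (e1 + ea) (s1 + sa)).
    { apply HP. intros; apply Hzv; lia. intros y Hy. unfold shiftc. arith_cases. }
    eexists _, _, _, _. split. eapply tconv. eapply tes. exact HP'. exact HMb.
    + apply CE_app; auto using CE_refl. unfold shiftc. simpl. arith_cases. rewrite app_nil_r. apply CE_refl.
    + apply ceq_refl.
    + exact HE.
    + split.
      * eapply ceq_trans. exact Hc. eapply ceq_trans. apply ceq_union. apply ceq_tail, Hc2. exact Hcd.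
        intro y. unfold ctx_union, ctx_tail, shiftc. rewrite (Hzv (S y + d)) by lia. arith_cases.
        replace (S y + d - d - 1) with y by lia. ce_perm.
      * unfold dec. subst. destruct Mh; [congruence|]. simpl. repeat split; intros; try lia. discriminate.
  -
    destruct (inv_es _ _ _ _ _ _ H _ _ eq_refl) as (G0 & D & L0 & M' & m0 & e0 & s0 & mu & eu & su & HT0 & HM & HC & Hc & HE & Hm & He & Hs).
    destruct ((proj1 T_lift_inv) _ _ _ _ _ _ HT0 1 0 t0 eq_refl) as (G0' & HT0' & Hc0).
    assert (Hz : G0 0 = []). { apply CE_nil_r. apply (Hc0 0). }
    rewrite Hz in HC. simpl in HC. apply CE_single_l in HC. destruct HC as (b & -> & HEb). apply E_n_inv in HEb. subst b.
    apply mt_single_inv in HM.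
    destruct (plugS _ _ _ _ _ _ _ HM) as (Gs & G2 & L2 & ms & es & ss & m2 & e2 & s2 & HT2 & HE2 & Hm2 & He2 & Hs2 & Hc2 & Hplug).
    apply E_n_inv_r in HE2. subst L2.
    destruct (inv_lam _ _ _ _ _ _ HT2 v eq_refl) as [(Hn2 & _ & ? & ? & ?) | (G3 & L3 & s3 & HT3 & Hs3 & Hc3 & HE3)].
    2:{ apply E_n_inv_r in HE3. discriminate. }
    set (d := depthS S0) in *.
    pose proof ((proj1 T_lift) _ _ _ _ _ _ HT0' d 0) as HTl.
    pose proof (Hplug _ _ _ _ _ _ HTl) as HP.
    eexists _, _, _, _. split. eapply tconv. apply HP.
    + intros y Hy. rewrite (CE_nil_ceq _ Hn2). unfold shiftc. arith_cases. apply CE_refl.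
    + apply ceq_refl.
    + exact HE.
    + split.
      * eapply ceq_trans. exact Hc. eapply ceq_trans. apply ceq_union. apply ceq_tail, Hc0. exact Hc2.
        intro y. unfold ctx_union, ctx_tail, shiftc. rewrite (CE_nil_ceq _ Hn2). arith_cases.
        replace (S y - 1) with y by lia. replace (y + d - d) with y by lia. ce_perm.
      * unfold dec. subst. repeat split; intros; try lia; discriminate.
Qed.

Ltac decsolve := unfold dec in *; subst;
  repeat match goal with H : _ /\ _ |- _ => destruct H end;
  repeat match goal with |- _ /\ _ => split | |- _ -> _ => intro end;
  repeat match goal with H : ?P -> _, H' : ?P |- _ => specialize (H H') end;
  try lia.

Definition SRT (k : kind) (a b : tm) : Prop := forall G L m e s, T G a L m e s ->
  exists G' m' e' s', T G' b L m' e' s' /\ ceq G G' /\ dec k m e s m' e' s'.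

Definition SRMT (k : kind) (a b : tm) : Prop := forall Ms G m e s, MT G a Ms m e s ->
  exists G' m' e' s', MT G' b Ms m' e' s' /\ ceq G G' /\ s' <= s /\ m' <= m /\ e' <= e /\
    (Ms <> [] -> dec k m e s m' e' s').

Lemma SRMT_of_SRT : forall k a b, SRT k a b -> SRMT k a b.
Proof.
  intros k a b HS Ms. induction Ms; intros G m e s H.
  - destruct (mt_nil_inv _ _ _ _ _ _ H eq_refl) as (Hn & ? & ? & ?). subst. exists G, 0, 0, 0. split. apply mt_nil; auto. split. apply ceq_refl. split. lia. split. lia. split. lia. congruence.
  - destruct (mt_cons_inv _ _ _ _ _ _ H a0 Ms eq_refl) as (Ga & Gb & ma & ea & sa & mb & eb & sb & HTa & HMb & Hc & Hm & He & Hs).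
    destruct (HS _ _ _ _ _ HTa) as (Ga' & ma' & ea' & sa' & HTa' & Hca & Hda).
    destruct (IHMs _ _ _ _ HMb) as (Gb' & mb' & eb' & sb' & HMb' & Hcb & ? & ? & ? & _).
    exists (ctx_union Ga' Gb'), (ma' + mb'), (ea' + eb'), (sa' + sb'). split. apply mcons; auto.
    split. eapply ceq_trans. exact Hc. apply ceq_union; auto.
    decsolve.
Qed.

Lemma wsr : forall W k r r', root k r r' -> SRT k (fillW W r) (fillW W r').
Proof.
  induction W as [| W IH u | u W IH | u W IH | W IH u]; intros k r r' HR; simpl.
  - intros G L m e s H. eapply root_sr; eauto.
  - intros G L m e s H.
    destruct (inv_app _ _ _ _ _ _ H _ _ eq_refl) as (G0 & D & M & L0 & M' & m0 & e0 & s0 & mu & eu & su & HT0 & HM & HC & Hc & HE & Hm & He & Hs).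
    destruct (IH _ _ _ HR _ _ _ _ _ HT0) as (G0' & m0' & e0' & s0' & HT0' & Hc0 & Hd).
    eexists _, _, _, _. split. eapply T_E. eapply tapp. exact HT0'. exact HM. exact HC. exact HE.
    split. eapply ceq_trans. exact Hc. apply ceq_union; auto using ceq_refl.
    decsolve.
  - intros G L m e s H.
    destruct (inv_app _ _ _ _ _ _ H _ _ eq_refl) as (G0 & D & M & L0 & M' & m0 & e0 & s0 & mu & eu & su & HT0 & HM & HC & Hc & HE & Hm & He & Hs).
    destruct (SRMT_of_SRT _ _ _ (IH _ _ _ HR) _ _ _ _ _ HM) as (D' & mu' & eu' & su' & HM' & Hc0 & ? & ? & ? & Hd).
    assert (Hne : M' <> []). { eapply CE_nonempty. exact HC. destruct M; simpl; congruence. }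
    specialize (Hd Hne).
    eexists _, _, _, _. split. eapply T_E. eapply tapp. exact HT0. exact HM'. exact HC. exact HE.
    split. eapply ceq_trans. exact Hc. apply ceq_union; auto using ceq_refl.
    decsolve.
  - intros G L m e s H.
    destruct (inv_es _ _ _ _ _ _ H _ _ eq_refl) as (G0 & D & L0 & M' & m0 & e0 & s0 & mu & eu & su & HT0 & HM & HC & Hc & HE & Hm & He & Hs).
    destruct (SRMT_of_SRT _ _ _ (IH _ _ _ HR) _ _ _ _ _ HM) as (D' & mu' & eu' & su' & HM' & Hc0 & ? & ? & ? & Hd).
    assert (Hne : M' <> []). { eapply CE_nonempty. exact HC. destruct (G0 0); simpl; congruence. }
    specialize (Hd Hne).
    eexists _, _, _, _. split. eapply T_E. eapply tes. exact HT0. exact HM'. exact HC. exact HE.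
    split. eapply ceq_trans. exact Hc. apply ceq_union; auto using ceq_refl.
    decsolve.
  - intros G L m e s H.
    destruct (inv_es _ _ _ _ _ _ H _ _ eq_refl) as (G0 & D & L0 & M' & m0 & e0 & s0 & mu & eu & su & HT0 & HM & HC & Hc & HE & Hm & He & Hs).
    destruct (IH _ _ _ HR _ _ _ _ _ HT0) as (G0' & m0' & e0' & s0' & HT0' & Hc0 & Hd).
    eexists _, _, _, _. split. eapply T_E. eapply tes. exact HT0'. exact HM.
    eapply CE_trans; [|exact HC]. apply CE_app; auto using CE_refl. apply CE_sym, Hc0. exact HE.
    split. eapply ceq_trans. exact Hc. apply ceq_union; auto using ceq_refl. apply ceq_tail; auto.
    decsolve.
Qed.

Lemma wstep_sr : forall k t t', wstep k t t' -> SRT k t t'.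
Proof. intros k t t' (W & r & r' & HR & -> & ->). eapply wsr; eauto. Qed.

Scheme typed_mut := Induction for typed Sort Prop with mtyped_mut := Induction for mtyped Sort Prop.
Combined Scheme typed_mtyped_mut from typed_mut, mtyped_mut.

Lemma frozen_typed :
  (forall G t L m e, typed G t L m e -> exists s, T G t L m e s) /\
  (forall G t M m e, mtyped G t M m e -> exists s, MT G t M m e s).
Proof.
  apply (typed_mtyped_mut (fun G t L m e _ => exists s, T G t L m e s) (fun G t M m e _ => exists s, MT G t M m e s)).
  - intros. eexists. apply tax.
  - intros. eexists. apply taxlam.
  - intros G t L m e _ [s H]. eexists. apply tlam; eauto.
  - intros G D t u M L M' m e m' e' _ [s1 H1] _ [s2 H2] Heq. eexists. eapply tapp; eauto. apply (proj2 frozen_eq); auto.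
  - intros G D t u L M' m e m' e' _ [s1 H1] _ [s2 H2] Heq. eexists. eapply tes; eauto. apply (proj2 frozen_eq); auto.
  - intros. eexists. apply mnil.
  - intros G D t L M m e m' e' _ [s1 H1] _ [s2 H2]. eexists. eapply mcons; eauto.
Qed.

Lemma T_SN : forall s G t L m e, T G t L m e s -> wSN t.
Proof.
  induction s as [s IH] using lt_wf_ind. intros G t L m e H [f [H0 Hf]].
  destruct (Hf 0) as [k Hk]. rewrite H0 in Hk.
  destruct (wstep_sr _ _ _ Hk _ _ _ _ _ H) as (G' & m' & e' & s' & HT' & _ & Hd).
  apply (IH s' (proj1 Hd) _ _ _ _ _ HT'). exists (fun i => f (S i)). split; auto.
Qed.

Lemma T_bound : forall t ks n, redseq t ks n -> forall G L m e s, T G t L m e s ->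
  count_kind Km ks <= m /\ count_kind Ke ks <= e.
Proof.
  induction 1; intros G L m e s HT.
  - unfold count_kind; simpl; lia.
  - destruct (wstep_sr _ _ _ H _ _ _ _ _ HT) as (G' & m' & e' & s' & HT' & _ & Hd).
    destruct (IHredseq _ _ _ _ _ HT') as [H1 H2].
    destruct Hd as (? & ? & ? & Hkm & Hke). unfold count_kind in *. destruct k; simpl; [specialize (Hkm eq_refl) | specialize (Hke eq_refl) | ]; lia.
Qed.

Theorem theorem6p2 :
  forall (G : ctx) (t : tm) (L : ltype) (m e : nat),
    typed G t L m e ->
    wSN t /\
    (forall (ks : list kind) (n : tm),
        redseq t ks n -> wnormal n ->
        count_kind Km ks <= m /\ count_kind Ke ks <= e).
Proof.
  intros G t L m e H. destruct ((proj1 frozen_typed) _ _ _ _ _ H) as [s HT]. split.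
  - eapply T_SN; eauto.
  - intros ks n Hr _. eapply T_bound; eauto.
Qed.
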